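(* The class of strongly separable extensions is Morita invariant: if $A/B$ is strongly separable and $A/B$ is Morita equivalent to $A'/B'$, then $A'/B'$ is strongly separable.
   Context: All rings have identity, subrings contain the identity, modules are unital; a ring extension $A/B$ means $B$ is a subring of $A$. Let $V=V_A(B)=\{a\in A\mid ba=ab\ \forall b\in B\}$ and $C=V_A(A)$ the center of $A$. $\mathrm{Hom}^\ell(V_C,A_C)$ denotes right $C$-homomorphisms $V\to A$ (an $A$-$A$-bimodule via $(xfy)(v)=xf(v)y$). $A/B$ is strongly separable if $V$ is finitely generated projective as a $C$-module and the $A$-$A$-homomorphism $A\otimes_BA\to\mathrm{Hom}^\ell(V_C,A_C)$, $x\otimes y\mapsto[v\mapsto xvy]$, splits (as an $A$-$A$-bimodule map). For bimodules ${}_AX_{A'}$, ${}_AY_{A'}$, write $X\mid Y$ if $X$ is isomorphic to a direct summand of a finite direct sum of copies of $Y$, and $X\sim Y$ if $X\mid Y$ and $Y\mid X$. $\mathrm{End}^r({}_AM)$ denotes the ring of left $A$-endomorphisms of $M$ acting on the right. A bimodule ${}_AM_{A'}$ is a Morita module if ${}_AM\sim{}_AA$ and $\mathrm{End}^r({}_AM)=A'$. Ring extensions $A/B$ and $A'/B'$ are Morita equivalent if there exist Morita modules ${}_AM_{A'}$ and ${}_BN_{B'}$ with ${}_AA\otimes_BN_{B'}\cong{}_AM_{B'}$. A class $\mathscr C$ is Morita invariant if whenever $A/B\in\mathscr C$ and $A/B$ is Morita equivalent to $A'/B'$, then $A'/B'\in\mathscr C$. *)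

(* Defs.v *)
(* Rings are arbitrary (possibly noncommutative) unital
   rings [pzRingType]; modules/bimodules are given by explicit actions on
   a [zmodType] together with the module axioms (MathComp has no theory of
   bimodules over noncommutative rings, nor of tensor products). *)
From HB Require Import structures.
From mathcomp Require Import all_boot all_algebra.
Set Implicit Arguments.
Unset Strict Implicit.
Unset Printing Implicit Defensive.
Import GRing.Theory.
Local Open Scope ring_scope.

Definition is_lmod (R : pzRingType) (M : zmodType) (la : R -> M -> M) : Prop :=
  [/\ forall r x y, la r (x + y) = la r x + la r y,
      forall r s x, la (r + s) x = la r x + la s x,
      forall r s x, la (r * s) x = la r (la s x)
    & forall x, la 1 x = x].

Definition is_rmod (S : pzRingType) (M : zmodType) (ra : M -> S -> M) : Prop :=
  [/\ forall s x y, ra (x + y) s = ra x s + ra y s,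
      forall s t x, ra x (s + t) = ra x s + ra x t,
      forall s t x, ra x (s * t) = ra (ra x s) t
    & forall x, ra x 1 = x].

Definition is_bimod (R S : pzRingType) (M : zmodType)
    (la : R -> M -> M) (ra : M -> S -> M) : Prop :=
  [/\ is_lmod la, is_rmod ra & forall r s x, la r (ra x s) = ra (la r x) s].

Definition additive_fun (X Y : zmodType) (f : X -> Y) : Prop :=
  forall x y, f (x + y) = f x + f y.

Definition lhom (R : pzRingType) (X Y : zmodType)
    (laX : R -> X -> X) (laY : R -> Y -> Y) (f : X -> Y) : Prop :=
  additive_fun f /\ forall r x, f (laX r x) = laY r (f x).

(* X | Y as left R-modules: X is isomorphic to a direct summand of Y^n,
   i.e. there are R-linear p : X -> Y^n, q : Y^n -> X with q o p = id. *)
Definition ldivides (R : pzRingType) (X Y : zmodType)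
    (laX : R -> X -> X) (laY : R -> Y -> Y) : Prop :=
  exists n : nat, exists (p : 'I_n -> X -> Y) (q : ('I_n -> Y) -> X),
    [/\ forall i, lhom laX laY (p i),
        forall u v, q (fun i => u i + v i) = q u + q v,
        forall r u, q (fun i => laY r (u i)) = laX r (q u)
      & forall x, q (fun i => p i x) = x].

Definition lreg (R : pzRingType) : R -> R -> R := fun r x => r * x.

(* _A M _A' is a Morita module: bimodule, _A M ~ _A A, and the canonical map
   A' -> End^r(_A M), a' |-> (m |-> m a'), is bijective (it is always a ring
   morphism since endomorphisms act on the right). *)
Definition morita_module (A A' : pzRingType) (M : zmodType)
    (laM : A -> M -> M) (raM : M -> A' -> M) : Prop :=
  [/\ is_bimod laM raM,
      ldivides laM (@lreg A),
      ldivides (@lreg A) laM,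
      forall f : M -> M, lhom laM laM f -> exists a' : A', forall m, f m = raM m a'
    & forall a1 a2 : A', (forall m, raM m a1 = raM m a2) -> a1 = a2].

Definition biadditive (X Y Z : zmodType) (phi : X -> Y -> Z) : Prop :=
  (forall x x' y, phi (x + x') y = phi x y + phi x' y) /\
  (forall x y y', phi x (y + y') = phi x y + phi x y').

Definition balanced (R : pzRingType) (X Y Z : zmodType)
    (ra : X -> R -> X) (la : R -> Y -> Y) (phi : X -> Y -> Z) : Prop :=
  forall x r y, phi (ra x r) y = phi x (la r y).

Definition is_tensor (R : pzRingType) (X Y T : zmodType)
    (ra : X -> R -> X) (la : R -> Y -> Y) (phi : X -> Y -> T) : Prop :=
  [/\ biadditive phi, balanced ra la phi &
      forall (Z : zmodType) (psi : X -> Y -> Z),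
        biadditive psi -> balanced ra la psi ->
        (exists g : T -> Z, additive_fun g /\ forall x y, g (phi x y) = psi x y) /\
        (forall g1 g2 : T -> Z,
           additive_fun g1 -> (forall x y, g1 (phi x y) = psi x y) ->
           additive_fun g2 -> (forall x y, g2 (phi x y) = psi x y) ->
           forall t, g1 t = g2 t)].

(* A ring extension A/B is given by a unital ring morphism iota : B -> A,
   assumed injective; B is identified with its image. *)

Section Ext.
Variables (A B : pzRingType) (iota : {rmorphism B -> A}).

Definition inC (a : A) : Prop := forall x : A, x * a = a * x.
Definition inV (a : A) : Prop := forall b : B, iota b * a = a * iota b.

(* V is finitely generated projective as a C-module: a direct summand of C^n. *)
Definition V_fgp : Prop :=
  exists n : nat, exists (p : 'I_n -> A -> A) (q : ('I_n -> A) -> A),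
    [/\ (forall i v, inV v -> inC (p i v)) /\
         (forall i v w, inV v -> inV w -> p i (v + w) = p i v + p i w) /\
         (forall i v c, inV v -> inC c -> p i (v * c) = p i v * c),
        (forall u, (forall i, inC (u i)) -> inV (q u)) /\
         (forall u u', (forall i, inC (u i)) -> (forall i, inC (u' i)) ->
            q (fun i => u i + u' i) = q u + q u') /\
         (forall u c, (forall i, inC (u i)) -> inC c ->
            q (fun i => u i * c) = q u * c)
      & forall v, inV v -> q (fun i => p i v) = v].

(* elements of Hom^l(V_C, A_C), represented by functions A -> A which are
   additive and right C-linear on V and vanish outside V *)
Definition isHomVA (f : A -> A) : Prop :=
  [/\ forall v w, inV v -> inV w -> f (v + w) = f v + f w,
      forall v c, inV v -> inC c -> f (v * c) = f v * c
    & forall a, ~ inV a -> f a = 0].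

(* A/B strongly separable: V f.g. projective over C and the A-A-bimodule map
   mu : A (x)_B A -> Hom^l(V_C, A_C), x (x) y |-> [v |-> x v y], has an
   A-A-bimodule section s. *)
Definition strongly_separable : Prop :=
  V_fgp /\
  exists (T : zmodType) (laT : A -> T -> T) (raT : T -> A -> T) (phi : A -> A -> T),
    [/\ is_bimod laT raT,
        is_tensor (fun x (b : B) => x * iota b) (fun (b : B) y => iota b * y) phi,
        forall x a b, phi (x * a) b = laT x (phi a b),
        forall a b y, phi a (b * y) = raT (phi a b) y &
    exists (mu : T -> A -> A) (s : (A -> A) -> T),
      [/\ forall t t' v, mu (t + t') v = mu t v + mu t' v,
          forall x y v, inV v -> mu (phi x y) v = x * v * y,
          forall f g, isHomVA f -> isHomVA g -> s (fun v => f v + g v) = s f + s g,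
          forall x y f, isHomVA f -> s (fun v => x * f v * y) = laT x (raT (s f) y)
        & forall f, isHomVA f -> forall v, inV v -> mu (s f) v = f v]].

End Ext.

(* Morita equivalence of ring extensions A/B (via iota) and A'/B' (via iota'):
   Morita modules _A M _A', _B N _B' with A (x)_B N ~= M as A-B'-bimodules,
   where M is a right B'-module by restriction along iota'. *)
Definition morita_equiv (A B A' B' : pzRingType)
    (iota : {rmorphism B -> A}) (iota' : {rmorphism B' -> A'}) : Prop :=
  exists (M : zmodType) (laM : A -> M -> M) (raM : M -> A' -> M)
         (N : zmodType) (laN : B -> N -> N) (raN : N -> B' -> N),
    [/\ morita_module laM raM,
        morita_module laN raN &
    exists phi : A -> N -> M,
      [/\ is_tensor (fun x (b : B) => x * iota b) laN phi,
          forall x a n, phi (x * a) n = laM x (phi a n)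
        & forall a n b', phi a (raN n b') = raM (phi a n) (iota' b')]].

(* Main.v *)
From HB Require Import structures.
Require Import Defs.
From mathcomp Require Import all_boot all_algebra generic_quotient.
From Stdlib Require Import ClassicalEpsilon FunctionalExtensionality.
Set Implicit Arguments.
Unset Strict Implicit.
Unset Printing Implicit Defensive.
Import GRing.Theory.
Local Open Scope quotient_scope.
Local Open Scope ring_scope.

Definition pb (P : Prop) : bool := if excluded_middle_informative P then true else false.
Lemma pbP (P : Prop) : reflect P (pb P).
Proof. rewrite /pb; case: excluded_middle_informative => h; by constructor. Qed.

Section Additive.
Variables (X Y : zmodType) (f : X -> Y).
Hypothesis fa : additive_fun f.
Lemma af0 : f 0 = 0.
Proof. have h := fa 0 0; rewrite addr0 in h; by apply: (addrI (f 0)); rewrite addr0 -h. Qed.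
Lemma afN x : f (- x) = - f x.
Proof. by apply/eqP; rewrite -subr_eq0 opprK -fa addNr af0. Qed.
Lemma afB x y : f (x - y) = f x - f y.
Proof. by rewrite fa afN. Qed.
Lemma af_sum (I : Type) (r : seq I) (P : pred I) (F : I -> X) :
  f (\sum_(i <- r | P i) F i) = \sum_(i <- r | P i) f (F i).
Proof. exact: (big_morph f fa af0). Qed.
Lemma af_sumT (I : Type) (r : seq I) (F : I -> X) :
  f (\sum_(i <- r) F i) = \sum_(i <- r) f (F i).
Proof. exact: (big_morph f fa af0). Qed.
End Additive.

Section TensorGen.
Variables (R : pzRingType) (X Y T : zmodType) (ra : X -> R -> X) (la : R -> Y -> Y)
  (phi : X -> Y -> T).
Hypothesis Ht : is_tensor ra la phi.

Definition tlift (Z : zmodType) (psi : X -> Y -> Z) : T -> Z :=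
  epsilon (inhabits (fun _ => 0)) (fun g => additive_fun g /\ forall x y, g (phi x y) = psi x y).

Lemma tlift_spec (Z : zmodType) (psi : X -> Y -> Z) :
  biadditive psi -> balanced ra la psi ->
  additive_fun (tlift psi) /\ forall x y, tlift psi (phi x y) = psi x y.
Proof.
move=> h1 h2; rewrite /tlift; apply epsilon_spec.
by case: Ht => _ _ /(_ Z psi h1 h2) [].
Qed.

Lemma tensor_ext (Z : zmodType) (g1 g2 : T -> Z) :
  additive_fun g1 -> additive_fun g2 -> (forall x y, g1 (phi x y) = g2 (phi x y)) ->
  forall t, g1 t = g2 t.
Proof.
move=> a1 a2 e; case: Ht => [[b1 b2] bal U].
have bi : biadditive (fun x y => g1 (phi x y)) by split=> *; rewrite ?b1 ?b2 a1.
have ba : balanced ra la (fun x y => g1 (phi x y)) by move=> x r y; rewrite bal.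
case: (U Z _ bi ba) => _ /(_ g1 g2 a1 (fun _ _ => erefl) a2) H.
by apply: H => x y; rewrite e.
Qed.

Lemma phi_addl x x' y : phi (x + x') y = phi x y + phi x' y.
Proof. by case: Ht => [[]]. Qed.
Lemma phi_addr x y y' : phi x (y + y') = phi x y + phi x y'.
Proof. by case: Ht => [[]]. Qed.
Lemma phi_bal x r y : phi (ra x r) y = phi x (la r y).
Proof. by case: Ht. Qed.
Lemma phi_suml (I : Type) (s : seq I) (F : I -> X) y :
  phi (\sum_(i <- s) F i) y = \sum_(i <- s) phi (F i) y.
Proof. by apply: (af_sum (f := fun x => phi x y)) => a b; rewrite phi_addl. Qed.
Lemma phi_sumr (I : Type) (s : seq I) (F : I -> Y) x :
  phi x (\sum_(i <- s) F i) = \sum_(i <- s) phi x (F i).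
Proof. by apply: (af_sum (f := fun y => phi x y)) => a b; rewrite phi_addr. Qed.
End TensorGen.

Section TensorConstr.
Variables (R : pzRingType) (X Y : zmodType) (ra : X -> R -> X) (la : R -> Y -> Y).

Definition tev (Z : zmodType) (psi : X -> Y -> Z) (s : seq (X * Y)) : Z :=
  \sum_(p <- s) psi p.1 p.2.

Definition teqP (s t : seq (X * Y)) : Prop :=
  forall (Z : zmodType) (psi : X -> Y -> Z), biadditive psi -> balanced ra la psi ->
    tev psi s = tev psi t.

Definition teq : rel (seq (X * Y)) := fun s t => pb (teqP s t).

Lemma teq_refl : reflexive teq.
Proof. by move=> s; apply/pbP. Qed.
Lemma teq_sym : symmetric teq.
Proof. by move=> s t; apply/pbP/pbP => h Z psi b1 b2; rewrite h. Qed.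
Lemma teq_trans : transitive teq.
Proof. by move=> t s u /pbP h1 /pbP h2; apply/pbP => Z psi b1 b2; rewrite h1 // h2. Qed.

Canonical teq_equiv := EquivRel teq teq_refl teq_sym teq_trans.

Definition TQ := {eq_quot teq_equiv}.
HB.instance Definition _ := Choice.on TQ.

Definition tq_zero : TQ := \pi_TQ [::].
Definition tq_add (a b : TQ) : TQ := \pi_TQ (repr a ++ repr b).
Definition tq_opp (a : TQ) : TQ := \pi_TQ (map (fun p => (- p.1, p.2)) (repr a)).

Lemma tev_cat (Z : zmodType) (psi : X -> Y -> Z) s t : tev psi (s ++ t) = tev psi s + tev psi t.
Proof. by rewrite /tev big_cat. Qed.

Lemma tev_repr (Z : zmodType) (psi : X -> Y -> Z) s :
  biadditive psi -> balanced ra la psi -> tev psi (repr (\pi_TQ s)) = tev psi s.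
Proof.
move=> b1 b2; have: teq (repr (\pi_TQ s)) s by apply/eqmodP; rewrite reprK.
by move/pbP => /(_ Z psi b1 b2).
Qed.

Lemma tq_eq s t : teqP s t -> \pi_TQ s = \pi_TQ t.
Proof. by move=> h; apply/eqmodP/pbP. Qed.

Lemma tq_addA : associative tq_add.
Proof.
move=> a b c; rewrite /tq_add; apply: tq_eq => Z psi b1 b2.
by rewrite !tev_cat !tev_repr // !tev_cat addrA.
Qed.
Lemma tq_addC : commutative tq_add.
Proof.
move=> a b; rewrite /tq_add; apply: tq_eq => Z psi b1 b2.
by rewrite !tev_cat addrC.
Qed.
Lemma tq_add0 : left_id tq_zero tq_add.
Proof.
move=> a; rewrite /tq_add /tq_zero; transitivity (\pi_TQ (repr a)); last exact: reprK.
apply: tq_eq => Z psi b1 b2.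
by rewrite tev_cat tev_repr // /tev big_nil add0r.
Qed.
Lemma tq_addN : left_inverse tq_zero tq_opp tq_add.
Proof.
move=> a; rewrite /tq_add /tq_opp /tq_zero; apply: tq_eq => Z psi b1 b2.
rewrite tev_cat tev_repr // /tev big_map big_nil -big_split /= big1 // => p _.
case: b1 => b1 _.
have h0 : psi 0 p.2 = 0 by apply: (af0 (f := fun x => psi x p.2)) => ? ?; rewrite b1.
by rewrite -b1 addNr h0.
Qed.

HB.instance Definition _ := GRing.isZmodule.Build TQ tq_addA tq_addC tq_add0 tq_addN.

Definition tphi (x : X) (y : Y) : TQ := \pi_TQ [:: (x, y)].

Lemma tq_addE s t : (\pi_TQ s : TQ) + (\pi_TQ t : TQ) = \pi_TQ (s ++ t).
Proof.
rewrite [LHS]/GRing.add /= /tq_add; apply: tq_eq => Z psi b1 b2.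
by rewrite !tev_cat !tev_repr.
Qed.

Lemma tq_zeroE : (0 : TQ) = \pi_TQ [::]. Proof. by []. Qed.

Lemma tensor_exists : is_tensor ra la tphi.
Proof.
split.
- split=> *; rewrite /tphi tq_addE; apply: tq_eq => Z psi [b1 b2] _;
  by rewrite /tev /= !big_cons !big_nil !addr0 ?b1 ?b2.
- move=> x r y; rewrite /tphi; apply: tq_eq => Z psi _ b2.
  by rewrite /tev !big_cons !big_nil b2.
move=> Z psi b1 b2; split.
  exists (fun t => tev psi (repr t)); split.
    move=> a b; rewrite -[a]reprK -[b]reprK tq_addE !tev_repr ?tev_cat //.
  by move=> x y; rewrite /tphi tev_repr // /tev big_cons big_nil addr0.
suff H : forall g, additive_fun g -> (forall x y, g (tphi x y) = psi x y) ->
   forall t, g t = tev psi (repr t).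
  by move=> g1 g2 a1 e1 a2 e2 t; rewrite H // H.
move=> g ag eg t; rewrite -{1}[t]reprK; elim: (repr t) => [|p s IH].
  by rewrite -tq_zeroE af0 // /tev big_nil.
have -> : (\pi_TQ (p :: s) : TQ) = tphi p.1 p.2 + (\pi_TQ s : TQ).
  by rewrite /tphi tq_addE; case: p.
by rewrite ag eg IH /tev big_cons.
Qed.

End TensorConstr.
Section ExtTensor.
Variables (A B : pzRingType) (iota : {rmorphism B -> A}) (T : zmodType) (phi : A -> A -> T).
Hypothesis Ht : is_tensor (fun x (b : B) => x * iota b) (fun (b : B) y => iota b * y) phi.

Let bil (x : A) : biadditive (fun a b => phi (x * a) b).
Proof. by split=> *; rewrite ?mulrDr ?(phi_addl Ht) ?(phi_addr Ht). Qed.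
Let bal (x : A) : balanced (fun x (b : B) => x * iota b) (fun (b : B) y => iota b * y)
   (fun a b => phi (x * a) b).
Proof. by move=> a r y /=; rewrite mulrA (phi_bal Ht). Qed.
Let bir (y : A) : biadditive (fun a b => phi a (b * y)).
Proof. by split=> *; rewrite ?mulrDl ?(phi_addl Ht) ?(phi_addr Ht). Qed.
Let bar (y : A) : balanced (fun x (b : B) => x * iota b) (fun (b : B) y => iota b * y)
   (fun a b => phi a (b * y)).
Proof. by move=> a r z /=; rewrite -mulrA (phi_bal Ht). Qed.

Definition tla (x : A) : T -> T := tlift phi (fun a b => phi (x * a) b).
Definition tra (t : T) (y : A) : T := tlift phi (fun a b => phi a (b * y)) t.

Lemma tla_add x : additive_fun (tla x). Proof. by case: (tlift_spec Ht (bil x) (bal x)). Qed.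
Lemma tla_phi x a b : tla x (phi a b) = phi (x * a) b.
Proof. by rewrite /tla; case: (tlift_spec Ht (bil x) (bal x)) => _ ->. Qed.
Lemma tra_add y : additive_fun (tra ^~ y). Proof. by case: (tlift_spec Ht (bir y) (bar y)). Qed.
Lemma tra_phi y a b : tra (phi a b) y = phi a (b * y).
Proof. by rewrite /tra; case: (tlift_spec Ht (bir y) (bar y)) => _ ->. Qed.

Lemma addf_comp (X Y Z : zmodType) (f : Y -> Z) (g : X -> Y) :
  additive_fun f -> additive_fun g -> additive_fun (fun x => f (g x)).
Proof. by move=> hf hg x y; rewrite hg hf. Qed.
Lemma addf_id (X : zmodType) : additive_fun (fun x : X => x). Proof. by []. Qed.
Lemma addf_add (X Y : zmodType) (f g : X -> Y) :
  additive_fun f -> additive_fun g -> additive_fun (fun x => f x + g x).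
Proof. by move=> hf hg x y; rewrite hf hg addrACA. Qed.

Lemma ext_bimod : is_bimod tla tra.
Proof.
have la := tla_add; have ra := tra_add.
split; [split|split|].
- by move=> r x y; rewrite tla_add.
- move=> r s; apply: (tensor_ext Ht) => [||a b]; rewrite ?tla_phi ?mulrDl ?(phi_addl Ht) //.
  exact: addf_add.
- move=> r s; apply: (tensor_ext Ht) => [||a b]; rewrite ?tla_phi ?mulrA //.
  exact: addf_comp.
- by apply: (tensor_ext Ht) => [||a b]; rewrite ?tla_phi ?mul1r.
- by move=> s x y; rewrite tra_add.
- move=> s t x; move: x; apply: (tensor_ext Ht) => [||a b]; rewrite ?tra_phi ?mulrDr ?(phi_addr Ht) //.
  exact: addf_add.
- move=> s t x; move: x; apply: (tensor_ext Ht) => [||a b]; rewrite ?tra_phi ?mulrA //.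
  exact: addf_comp (ra _) (ra _).
- by apply: (tensor_ext Ht) => [||a b]; rewrite ?tra_phi ?mulr1.
- move=> r s; apply: (tensor_ext Ht) => [||a b]; rewrite ?tra_phi ?tla_phi //.
  + exact: addf_comp (la _) (ra _).
  + exact: addf_comp (ra _) (la _).
  + by rewrite tra_phi.
Qed.

End ExtTensor.
Section BimodLemmas.
Variables (R S : pzRingType) (X : zmodType) (la : R -> X -> X) (ra : X -> S -> X).
Hypothesis H : is_bimod la ra.
Lemma bm_laD r x y : la r (x + y) = la r x + la r y. Proof. by case: H => [[]]. Qed.
Lemma bm_laDl r s x : la (r + s) x = la r x + la s x. Proof. by case: H => [[]]. Qed.
Lemma bm_laM r s x : la (r * s) x = la r (la s x). Proof. by case: H => [[]]. Qed.
Lemma bm_la1 x : la 1 x = x. Proof. by case: H => [[]]. Qed.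
Lemma bm_raD s x y : ra (x + y) s = ra x s + ra y s. Proof. by case: H => _ [] . Qed.
Lemma bm_raDr s t x : ra x (s + t) = ra x s + ra x t. Proof. by case: H => _ []. Qed.
Lemma bm_raM s t x : ra x (s * t) = ra (ra x s) t. Proof. by case: H => _ []. Qed.
Lemma bm_ra1 x : ra x 1 = x. Proof. by case: H => _ []. Qed.
Lemma bm_lara r s x : la r (ra x s) = ra (la r x) s. Proof. by case: H. Qed.
Lemma bm_la_add r : additive_fun (la r). Proof. exact: bm_laD. Qed.
Lemma bm_la_addl x : additive_fun (la^~ x). Proof. by move=> ? ?; exact: bm_laDl. Qed.
Lemma bm_ra_add s : additive_fun (ra^~ s). Proof. by move=> ? ?; exact: bm_raD. Qed.
Lemma bm_ra_addr x : additive_fun (ra x). Proof. by move=> ? ?; exact: bm_raDr. Qed.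
Lemma bm_la0 r : la r 0 = 0. Proof. exact: af0 (bm_la_add r). Qed.
Lemma bm_la0l x : la 0 x = 0. Proof. exact: af0 (bm_la_addl x). Qed.
Lemma bm_ra0 s : ra 0 s = 0. Proof. exact: af0 (bm_ra_add s). Qed.
Lemma bm_ra0r x : ra x 0 = 0. Proof. exact: af0 (bm_ra_addr x). Qed.
Lemma bm_la_sumr (I : Type) (r0 : seq I) (F : I -> X) r :
  la r (\sum_(i <- r0) F i) = \sum_(i <- r0) la r (F i).
Proof. by apply: (af_sumT (bm_la_add r)). Qed.
Lemma bm_la_suml (I : Type) (r0 : seq I) (F : I -> R) x :
  la (\sum_(i <- r0) F i) x = \sum_(i <- r0) la (F i) x.
Proof. by apply: (af_sumT (bm_la_addl x)). Qed.
Lemma bm_ra_suml (I : Type) (r0 : seq I) (F : I -> X) s :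
  ra (\sum_(i <- r0) F i) s = \sum_(i <- r0) ra (F i) s.
Proof. by apply: (af_sumT (bm_ra_add s)). Qed.
Lemma bm_ra_sumr (I : Type) (r0 : seq I) (F : I -> S) x :
  ra x (\sum_(i <- r0) F i) = \sum_(i <- r0) ra x (F i).
Proof. by apply: (af_sumT (bm_ra_addr x)). Qed.
End BimodLemmas.

Section ExtLemmas.
Variables (A B : pzRingType) (iota : {rmorphism B -> A}).
Lemma inC0 : inC (0 : A). Proof. by move=> x; rewrite mulr0 mul0r. Qed.
Lemma inC1 : inC (1 : A). Proof. by move=> x; rewrite mulr1 mul1r. Qed.
Lemma inC_add (a b : A) : inC a -> inC b -> inC (a + b).
Proof. by move=> ha hb x; rewrite mulrDr mulrDl ha hb. Qed.
Lemma inC_mul (a b : A) : inC a -> inC b -> inC (a * b).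
Proof. by move=> ha hb x; rewrite mulrA ha -mulrA hb mulrA. Qed.
Lemma inC_sum (I : Type) (r : seq I) (F : I -> A) : (forall i, inC (F i)) -> inC (\sum_(i <- r) F i).
Proof. move=> h; elim: r => [|a r IH]; rewrite ?big_nil ?big_cons; [exact: inC0|exact: inC_add]. Qed.
Lemma inV0 : inV iota 0. Proof. by move=> x; rewrite mulr0 mul0r. Qed.
Lemma inV_add (a b : A) : inV iota a -> inV iota b -> inV iota (a + b).
Proof. by move=> ha hb x; rewrite mulrDr mulrDl ha hb. Qed.
Lemma inV_mul (a b : A) : inV iota a -> inV iota b -> inV iota (a * b).
Proof. by move=> ha hb x; rewrite mulrA ha -mulrA hb mulrA. Qed.
Lemma inV_sum (I : Type) (r : seq I) (F : I -> A) : (forall i, inV iota (F i)) -> inV iota (\sum_(i <- r) F i).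
Proof. move=> h; elim: r => [|a r IH]; rewrite ?big_nil ?big_cons; [exact: inV0|exact: inV_add]. Qed.
Lemma inC_V (a : A) : inC a -> inV iota a.
Proof. by move=> h b; rewrite h. Qed.
End ExtLemmas.

Lemma tup_sum (X Z : zmodType) n (q : ('I_n -> X) -> Z) :
  (forall u v, q (fun i => u i + v i) = q u + q v) ->
  forall (I : Type) (r : seq I) (F : I -> 'I_n -> X),
  q (fun j => \sum_(l <- r) F l j) = \sum_(l <- r) q (F l).
Proof.
move=> qa I r F.
have q0 : q (fun _ => 0) = 0.
  have h := qa (fun _ => 0) (fun _ => 0).
  have e : (fun _ : 'I_n => (0 : X) + 0) = (fun _ => 0) by apply: functional_extensionality => ?; rewrite addr0.
  by rewrite e in h; apply: (addrI (q (fun _ => 0))); rewrite addr0 -h.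
elim: r => [|a r IH].
  rewrite big_nil -q0; congr q; apply: functional_extensionality => j; by rewrite big_nil.
rewrite big_cons -IH -qa; congr q; apply: functional_extensionality => j; by rewrite big_cons.
Qed.

Lemma tup_decomp (X : zmodType) n (u : 'I_n -> X) :
  u = fun j => \sum_(l < n) (if j == l then u l else 0).
Proof.
apply: functional_extensionality => j.
rewrite (bigD1 j) //= eqxx big1 ?addr0 // => l; rewrite eq_sym => /negbTE ->. by [].
Qed.

Lemma addf_sum (X Y : zmodType) (I : Type) (r : seq I) (F : I -> X -> Y) :
  (forall i, additive_fun (F i)) -> additive_fun (fun x => \sum_(i <- r) F i x).
Proof. by move=> h x y; rewrite -big_split; apply: eq_bigr => i _; rewrite h. Qed.

Section IsHom.
Variables (A B : pzRingType) (iota : {rmorphism B -> A}).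
Lemma isHom0 : isHomVA iota (fun _ => 0).
Proof. by split=> *; rewrite ?addr0 ?mul0r. Qed.
Lemma isHom_add f g : isHomVA iota f -> isHomVA iota g -> isHomVA iota (fun v => f v + g v).
Proof.
case=> fa fl fo [ga gl go]; split=> [v w hv hw|v c hv hc|a ha].
- by rewrite fa // ga // addrACA.
- by rewrite fl // gl // mulrDl.
by rewrite fo // go // addr0.
Qed.
Lemma isHom_scale x y f : isHomVA iota f -> isHomVA iota (fun v => x * f v * y).
Proof.
case=> fa fl fo; split=> [v w hv hw|v c hv hc|a ha].
- by rewrite fa // mulrDr mulrDl.
- by rewrite fl // -!mulrA hc.
by rewrite fo // mulr0 mul0r.
Qed.
Lemma isHom_sum (I : Type) (r : seq I) (G : I -> A -> A) : (forall j, isHomVA iota (G j)) ->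
  isHomVA iota (fun v => \sum_(j <- r) G j v).
Proof.
move=> h; elim: r => [|j r IH].
  have -> : (fun v : A => \sum_(j <- [::]) G j v) = (fun _ => 0).
    by apply: functional_extensionality => v; rewrite big_nil.
  exact: isHom0.
have -> : (fun v : A => \sum_(i <- j :: r) G i v) = (fun v => G j v + \sum_(i <- r) G i v).
  by apply: functional_extensionality => v; rewrite big_cons.
exact: isHom_add.
Qed.
End IsHom.

Set Implicit Arguments.
Unset Strict Implicit.
Unset Printing Implicit Defensive.
Import GRing.Theory.
Local Open Scope quotient_scope.
Local Open Scope ring_scope.
Section Main.
Variables (A B A' B' : pzRingType) (iota : {rmorphism B -> A}) (iota' : {rmorphism B' -> A'}).
Variables (M : zmodType) (laM : A -> M -> M) (raM : M -> A' -> M).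
Variables (N : zmodType) (laN : B -> N -> N) (raN : N -> B' -> N).
Hypothesis bimM : is_bimod laM raM.
Hypothesis bimN : is_bimod laN raN.
Hypothesis endM : forall f : M -> M, lhom laM laM f -> exists a' : A', forall m, f m = raM m a'.
Hypothesis injM : forall a1 a2 : A', (forall m, raM m a1 = raM m a2) -> a1 = a2.
Hypothesis endN : forall f : N -> N, lhom laN laN f -> exists b' : B', forall m, f m = raN m b'.
Variables (nM : nat) (fM : 'I_nM -> M -> A) (qM : ('I_nM -> A) -> M).
Hypothesis fM_hom : forall i, lhom laM (@lreg A) (fM i).
Hypothesis qM_add : forall u v, qM (fun i => u i + v i) = qM u + qM v.
Hypothesis qM_lin : forall r u, qM (fun i => lreg r (u i)) = laM r (qM u).
Hypothesis qM_fM : forall m, qM (fun i => fM i m) = m.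
Variables (kN : nat) (pN : 'I_kN -> B -> N) (qN : ('I_kN -> N) -> B).
Hypothesis pN_hom : forall l, lhom (@lreg B) laN (pN l).
Hypothesis qN_add : forall u v, qN (fun i => u i + v i) = qN u + qN v.
Hypothesis qN_lin : forall r u, qN (fun i => laN r (u i)) = lreg r (qN u).
Hypothesis qN_pN : forall x, qN (fun l => pN l x) = x.
Variable phi : A -> N -> M.
Hypothesis Hphi : is_tensor (fun x (b : B) => x * iota b) laN phi.
Hypothesis phiL : forall x a n, phi (x * a) n = laM x (phi a n).
Hypothesis phiR : forall a n b', phi a (raN n b') = raM (phi a n) (iota' b').

Lemma phi1 a n : phi a n = laM a (phi 1 n).
Proof. by rewrite -phiL mulr1. Qed.

Lemma M_ext (Z : zmodType) (g1 g2 : M -> Z) :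
  additive_fun g1 -> additive_fun g2 -> (forall a n, g1 (phi a n) = g2 (phi a n)) ->
  forall u, g1 u = g2 u.
Proof. move=> a1 a2 e; exact: (tensor_ext Hphi a1 a2 e). Qed.

Definition mkA' (F : M -> M) : A' :=
  epsilon (inhabits 0) (fun a' => forall m, raM m a' = F m).
Lemma mkA'_spec F : lhom laM laM F -> forall m, raM m (mkA' F) = F m.
Proof.
move=> h; rewrite /mkA'; apply epsilon_spec.
by case: (endM h) => a' e; exists a' => m; rewrite e.
Qed.
Definition mkB' (F : N -> N) : B' :=
  epsilon (inhabits 0) (fun b' => forall m, raN m b' = F m).
Lemma mkB'_spec F : lhom laN laN F -> forall m, raN m (mkB' F) = F m.
Proof.
move=> h; rewrite /mkB'; apply epsilon_spec.
by case: (endN h) => a' e; exists a' => m; rewrite e.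
Qed.

Lemma A'_ext (a1 a2 : A') : (forall a n, raM (phi a n) a1 = raM (phi a n) a2) -> a1 = a2.
Proof.
move=> h; apply: injM; apply: M_ext => // x y; exact: (bm_raD bimM).
Qed.

Definition eM (i : 'I_nM) : M := qM (fun j => if j == i then 1 else 0).
Lemma fM_add i : additive_fun (fM i). Proof. by case: (fM_hom i). Qed.
Lemma fM_lin i a m : fM i (laM a m) = a * fM i m. Proof. by case: (fM_hom i) => _ ->. Qed.
Lemma qM_decomp u : qM u = \sum_i laM (u i) (eM i).
Proof.
rewrite {1}(tup_decomp u) (tup_sum qM_add); apply: eq_bigr => i _.
rewrite /eM -qM_lin; congr qM; apply: functional_extensionality => j.
by rewrite /lreg; case: (j == i); rewrite ?mulr1 ?mulr0.
Qed.
Lemma M_decomp m : m = \sum_i laM (fM i m) (eM i).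
Proof. by rewrite -{1}(qM_fM m) qM_decomp. Qed.

Definition nu (l : 'I_kN) (n : N) : B := qN (fun j => if j == l then n else 0).
Definition g (l : 'I_kN) : N := pN l 1.
Lemma qN_decomp u : qN u = \sum_l nu l (u l).
Proof. by rewrite {1}(tup_decomp u) (tup_sum qN_add). Qed.
Lemma nu_add l : additive_fun (nu l).
Proof.
move=> x y; rewrite /nu -qN_add; congr qN; apply: functional_extensionality => j.
by case: (j == l); rewrite ?addr0.
Qed.
Lemma nu_lin l b n : nu l (laN b n) = b * nu l n.
Proof.
rewrite /nu -[RHS]/(lreg b _) -qN_lin; congr qN; apply: functional_extensionality => j.
by case: (j == l); rewrite ?(bm_la0 bimN).
Qed.
Lemma sum_nu : \sum_l nu l (g l) = 1.
Proof. by rewrite -qN_decomp qN_pN. Qed.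

Definition beta (l : 'I_kN) (n : N) : B' := mkB' (fun u => laN (nu l u) n).
Lemma beta_spec l n u : raN u (beta l n) = laN (nu l u) n.
Proof.
rewrite mkB'_spec //; split.
  by move=> x y; rewrite nu_add (bm_laDl bimN).
by move=> r x; rewrite nu_lin (bm_laM bimN).
Qed.
Lemma N_decomp n : n = \sum_l raN (g l) (beta l n).
Proof.
under eq_bigr do rewrite beta_spec.
by rewrite -(bm_la_suml bimN) sum_nu (bm_la1 bimN).
Qed.

Let mut_bi l : biadditive (fun a n => a * iota (nu l n)).
Proof. by split=> *; rewrite ?mulrDl ?nu_add ?rmorphD ?mulrDr. Qed.
Let mut_bal l : balanced (fun x (b : B) => x * iota b) laN (fun a n => a * iota (nu l n)).
Proof. by move=> x r y; rewrite nu_lin rmorphM mulrA. Qed.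
Definition mut (l : 'I_kN) : M -> A := tlift phi (fun a n => a * iota (nu l n)).
Lemma mut_add l : additive_fun (mut l). Proof. by case: (tlift_spec Hphi (mut_bi l) (mut_bal l)). Qed.
Lemma mut_phi l a n : mut l (phi a n) = a * iota (nu l n).
Proof. by rewrite /mut; case: (tlift_spec Hphi (mut_bi l) (mut_bal l)) => _ ->. Qed.
Lemma mut_lin l x u : mut l (laM x u) = x * mut l u.
Proof.
move: u; apply: M_ext => [||a n].
- by move=> u v; rewrite (bm_laD bimM) mut_add.
- by move=> u v; rewrite mut_add mulrDr.
by rewrite -phiL !mut_phi mulrA.
Qed.
Lemma A_recon a : a = \sum_l mut l (phi a (g l)).
Proof.
under eq_bigr do rewrite mut_phi.
by rewrite -mulr_sumr -rmorph_sum sum_nu rmorph1 mulr1.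
Qed.

Lemma raM_beta l n u : raM u (iota' (beta l n)) = phi (mut l u) n.
Proof.
move: u; apply: M_ext => [||a k].
- move=> x y; exact: (bm_raD bimM).
- by move=> u v; rewrite mut_add (phi_addl Hphi).
by rewrite -phiR beta_spec mut_phi -(phi_bal Hphi).
Qed.


Let vp_bi v : biadditive (fun a n => phi (a * v) n).
Proof. by split=> *; rewrite ?mulrDl ?(phi_addl Hphi) ?(phi_addr Hphi). Qed.
Let vp_bal v : inV iota v -> balanced (fun x (b : B) => x * iota b) laN (fun a n => phi (a * v) n).
Proof. by move=> hv x r y; rewrite -mulrA hv mulrA (phi_bal Hphi). Qed.
Definition vpF v : M -> M := tlift phi (fun a n => phi (a * v) n).
Lemma vpF_add v : inV iota v -> additive_fun (vpF v).
Proof. by move=> hv; case: (tlift_spec Hphi (vp_bi v) (vp_bal hv)). Qed.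
Lemma vpF_phi v a n : inV iota v -> vpF v (phi a n) = phi (a * v) n.
Proof. by move=> hv; rewrite /vpF; case: (tlift_spec Hphi (vp_bi v) (vp_bal hv)) => _ ->. Qed.
Lemma vpF_lhom v : inV iota v -> lhom laM laM (vpF v).
Proof.
move=> hv; split; first exact: vpF_add.
move=> r u; move: u; apply: M_ext => [||a n].
- by move=> x y; rewrite (bm_laD bimM) vpF_add.
- by move=> x y; rewrite vpF_add // (bm_laD bimM).
by rewrite -phiL !vpF_phi // -mulrA phiL.
Qed.
Definition vprime v : A' := mkA' (vpF v).
Lemma vp_raM v u : inV iota v -> raM u (vprime v) = vpF v u.
Proof. by move=> hv; rewrite mkA'_spec //; exact: vpF_lhom. Qed.
Lemma vp_phi v a n : inV iota v -> raM (phi a n) (vprime v) = phi (a * v) n.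
Proof. by move=> hv; rewrite vp_raM // vpF_phi. Qed.

Lemma vp_add v w : inV iota v -> inV iota w -> vprime (v + w) = vprime v + vprime w.
Proof.
move=> hv hw; have hvw := inV_add hv hw; apply: A'_ext => a n.
by rewrite (bm_raDr bimM) !vp_phi // mulrDr (phi_addl Hphi).
Qed.
Lemma vp_mul v w : inV iota v -> inV iota w -> vprime (v * w) = vprime v * vprime w.
Proof.
move=> hv hw; have hvw := inV_mul hv hw; apply: A'_ext => a n.
by rewrite (bm_raM bimM) !vp_phi // mulrA.
Qed.
Lemma vp_V v : inV iota v -> inV iota' (vprime v).
Proof.
move=> hv b; apply: A'_ext => a n.
by rewrite !(bm_raM bimM) -phiR !vp_phi // phiR.
Qed.
Lemma vp_Cact c u : inC c -> raM u (vprime c) = laM c u.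
Proof.
move=> hc; rewrite vp_raM ?inC_V //; move: u; apply: M_ext => [||a n].
- by apply: vpF_add; apply: inC_V.
- move=> x y; exact: (bm_laD bimM).
by rewrite vpF_phi ?inC_V // hc phiL.
Qed.
Lemma vp_C c : inC c -> inC (vprime c).
Proof.
move=> hc y; apply: injM => u.
by rewrite !(bm_raM bimM) !vp_Cact // (bm_lara bimM).
Qed.
Lemma vp0 : vprime 0 = 0.
Proof.
have h := vp_add (inV0 iota) (inV0 iota); rewrite addr0 in h.
by apply: (addrI (vprime 0)); rewrite addr0 -h.
Qed.
Lemma vp_sum (I : Type) (r : seq I) (F : I -> A) : (forall i, inV iota (F i)) ->
  vprime (\sum_(i <- r) F i) = \sum_(i <- r) vprime (F i).
Proof.
move=> h; elim: r => [|a r IH]; rewrite ?big_nil ?vp0 // !big_cons vp_add ?IH //.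
exact: inV_sum.
Qed.

Definition vof (w : A') : A := \sum_l mut l (raM (phi 1 (g l)) w).
Lemma vof_add : additive_fun vof.
Proof.
move=> x y; rewrite /vof -big_split; apply: eq_bigr => l _.
by rewrite (bm_raDr bimM) mut_add.
Qed.
Lemma vof_vp v : inV iota v -> vof (vprime v) = v.
Proof.
move=> hv; rewrite [RHS]A_recon; apply: eq_bigr => l _.
by rewrite vp_phi // mul1r.
Qed.
Lemma vof_key w : inV iota' w -> forall a n, raM (phi a n) w = phi (a * vof w) n.
Proof.
move=> hw a n.
suff h : raM (phi 1 n) w = phi (vof w) n by rewrite phi1 -(bm_lara bimM) h -phiL.
rewrite {1}(N_decomp n) (phi_sumr Hphi) (bm_ra_suml bimM) /vof (phi_suml Hphi).
apply: eq_bigr => l _.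
by rewrite phiR -(bm_raM bimM) hw (bm_raM bimM) raM_beta.
Qed.
Lemma vof_V w : inV iota' w -> inV iota (vof w).
Proof.
move=> hw b.
have e n : phi (iota b * vof w) n = phi (vof w * iota b) n.
  have k1 n' : raM (phi 1 n') w = phi (vof w) n' by rewrite vof_key // mul1r.
  rewrite phiL -k1 (bm_lara bimM) -phiL mulr1.
  have -> : phi (iota b) n = phi 1 (laN b n) by rewrite -(phi_bal Hphi) mul1r.
  by rewrite k1 -(phi_bal Hphi).
rewrite [LHS]A_recon [RHS]A_recon; apply: eq_bigr => l _; by rewrite e.
Qed.
Lemma vp_vof w : inV iota' w -> vprime (vof w) = w.
Proof.
move=> hw; apply: A'_ext => a n; rewrite vp_phi; [by rewrite vof_key | exact: vof_V].
Qed.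

Definition good (h : M -> A) := additive_fun h /\ forall a u, h (laM a u) = a * h u.

Definition bra (h : M -> A) (m : M) : A' := mkA' (fun u => laM (h u) m).
Lemma bra_spec h m u : good h -> raM u (bra h m) = laM (h u) m.
Proof.
move=> [ha hl]; rewrite mkA'_spec //; split.
  by move=> x y; rewrite ha (bm_laDl bimM).
by move=> r x; rewrite hl (bm_laM bimM).
Qed.
Lemma good_fM i : good (fM i). Proof. by split; [exact: fM_add | exact: fM_lin]. Qed.
Lemma good_mutr l y : good (fun u => mut l u * y).
Proof. by split=> [u v|a u]; rewrite ?mut_add ?mulrDl // mut_lin mulrA. Qed.
Lemma good_comp h a' : good h -> good (fun u => h (raM u a')).
Proof.
case=> ha hl; split=> [u v|a u]; first by rewrite (bm_raD bimM) ha.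
by rewrite -(bm_lara bimM) hl.
Qed.
Lemma good_scale h a : good h -> good (fun u => h u * a).
Proof. by case=> ha hl; split=> [u v|b u]; rewrite ?ha ?mulrDl // hl mulrA. Qed.
Lemma good_sum (I : Type) (r : seq I) (H : I -> M -> A) : (forall i, good (H i)) ->
  good (fun u => \sum_(i <- r) H i u).
Proof.
move=> h; split=> [u v|a u]; first by apply: addf_sum => i; case: (h i).
rewrite mulr_sumr; apply: eq_bigr => i _; by case: (h i) => _ ->.
Qed.

Ltac gd := repeat first [ assumption | apply: good_fM | apply: good_mutr | apply: good_comp | apply: good_scale | apply: good_sum => ? ].
Lemma bra_summ h (I : Type) (r : seq I) (F : I -> M) : good h ->
  bra h (\sum_(i <- r) F i) = \sum_(i <- r) bra h (F i).
Proof.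
move=> gh; apply: injM => u; rewrite (bm_ra_sumr bimM) bra_spec // (bm_la_sumr bimM).
by apply: eq_bigr => i _; rewrite bra_spec.
Qed.
Lemma bra_addm h m1 m2 : good h -> bra h (m1 + m2) = bra h m1 + bra h m2.
Proof. by move=> gh; apply: injM => u; rewrite (bm_raDr bimM) !bra_spec // (bm_laD bimM). Qed.
Lemma bra_sumh (I : Type) (r : seq I) (H : I -> M -> A) m : (forall i, good (H i)) ->
  bra (fun u => \sum_(i <- r) H i u) m = \sum_(i <- r) bra (H i) m.
Proof.
move=> gh; apply: injM => u; rewrite (bm_ra_sumr bimM) bra_spec; last exact: good_sum.
rewrite (bm_la_suml bimM).
by apply: eq_bigr => i _; rewrite bra_spec.
Qed.
Lemma bra_addh h1 h2 m : good h1 -> good h2 ->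
  bra (fun u => h1 u + h2 u) m = bra h1 m + bra h2 m.
Proof.
move=> g1 g2; have g12 : good (fun u => h1 u + h2 u).
  case: g1 g2 => a1 l1 [a2 l2]; split=> [u v|a u]; first exact: addf_add.
  by rewrite l1 l2 mulrDr.
by apply: injM => u; rewrite (bm_raDr bimM) !bra_spec // (bm_laDl bimM).
Qed.
Lemma bra_mulr h m a' : good h -> bra h m * a' = bra h (raM m a').
Proof. by move=> gh; apply: injM => u; rewrite (bm_raM bimM) !bra_spec // (bm_lara bimM). Qed.
Lemma bra_mull h m a' : good h -> a' * bra h m = bra (fun u => h (raM u a')) m.
Proof. by move=> gh; apply: injM => u; rewrite (bm_raM bimM) !bra_spec //; gd. Qed.
Lemma bra_scale h m a : good h -> bra h (laM a m) = bra (fun u => h u * a) m.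
Proof. move=> gh; apply: injM => u; rewrite !bra_spec; try gd; by rewrite (bm_laM bimM). Qed.

Lemma vof_C w : inC w -> inC (vof w).
Proof.
move=> hw; have hwV : inV iota' w := inC_V iota' hw.
set v := vof w.
have k1 n' : raM (phi 1 n') w = phi v n' by rewrite vof_key // mul1r.
move=> x.
have e k : phi (x * v) k = phi (v * x) k.
  pose Bl l := bra (fun u => mut l u * x) (phi 1 k).
  have E : \sum_l raM (phi 1 (g l)) (Bl l * w) = \sum_l raM (phi 1 (g l)) (w * Bl l).
    by apply: eq_bigr => l _; rewrite hw.
  have L : \sum_l raM (phi 1 (g l)) (Bl l * w) = \sum_l laM (iota (nu l (g l)) * x) (phi v k).
    apply: eq_bigr => l _.
    rewrite (bm_raM bimM) bra_spec; last gd. by rewrite -(bm_lara bimM) k1 mut_phi mul1r.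
  have R : \sum_l raM (phi 1 (g l)) (w * Bl l) = \sum_l laM (mut l (raM (phi 1 (g l)) w) * x) (phi 1 k).
    apply: eq_bigr => l _.
    by rewrite (bm_raM bimM) bra_spec; last gd.
  rewrite L R -!(bm_la_suml bimM) -!mulr_suml -rmorph_sum sum_nu rmorph1 mul1r in E.
  by rewrite phiL E -/(vof w) -/v -phiL mulr1.
rewrite [LHS]A_recon [RHS]A_recon; apply: eq_bigr => l _; by rewrite e.
Qed.

Lemma Vfgp' : V_fgp iota -> V_fgp iota'.
Proof.
case=> n0 [p [q [[pC [padd plin]] [qV [qadd qlin]] pq]]].
pose d (i j : 'I_n0) : A := if j == i then 1 else 0.
have dC i j : inC (d i j) by rewrite /d; case: ifP => _; [exact: inC1 | exact: inC0].
pose z i := q (d i).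
have zV i : inV iota (z i) := qV _ (dC i).
have q0 : q (fun _ => 0) = 0.
  have h := qadd (fun _ => 0) (fun _ => 0) (fun _ => @inC0 A) (fun _ => @inC0 A).
  have e : (fun _ : 'I_n0 => (0 : A) + 0) = (fun _ => 0).
    by apply: functional_extensionality => ?; rewrite addr0.
  by rewrite e in h; apply: (addrI (q (fun _ => 0))); rewrite addr0 -h.
have qs (r : seq 'I_n0) (F : 'I_n0 -> 'I_n0 -> A) : (forall i j, inC (F i j)) ->
    q (fun j => \sum_(i <- r) F i j) = \sum_(i <- r) q (F i).
  move=> hF; elim: r => [|a r IH].
    rewrite big_nil -q0; congr q; apply: functional_extensionality => j; by rewrite big_nil.
  rewrite big_cons -IH -qadd; last by move=> j; apply: inC_sum.
    by congr q; apply: functional_extensionality => j; rewrite big_cons.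
  by [].
have qdec u : (forall i, inC (u i)) -> q u = \sum_i z i * u i.
  move=> hu; rewrite {1}(tup_decomp u) qs; last first.
    by move=> i j; case: (j == i); [exact: hu | exact: inC0].
  apply: eq_bigr => i _; rewrite /z -qlin //.
  congr q; apply: functional_extensionality => j; rewrite /d.
  by case: (j == i); rewrite ?mul1r ?mul0r.
exists n0, (fun i w => vprime (p i (vof w))), (fun u => \sum_i vprime (z i) * u i).
have pCV i w : inV iota' w -> inV iota (p i (vof w)).
  by move=> hw; apply: inC_V; apply: pC; exact: vof_V.
split.
- split; [|split].
  + by move=> i w hw; apply: vp_C; apply: pC; exact: vof_V.
  + move=> i v w hv hw; have hv' := vof_V hv; have hw' := vof_V hw.
    by rewrite vof_add padd // vp_add //; apply: pCV.
  + move=> i v c hv hc; have hcV := inC_V iota' hc.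
    have hvv := vof_V hv; have hcc := vof_V hcV.
    have e : vof (v * c) = vof v * vof c.
      rewrite -{1}(vp_vof hv) -{1}(vp_vof hcV) -vp_mul //; apply: vof_vp; exact: inV_mul.
    rewrite e plin //; last exact: vof_C.
    rewrite vp_mul; [by rewrite vp_vof | exact: pCV | exact: hcc].
- split; [|split].
  + move=> u hu; apply: inV_sum => i; apply: inV_mul; [exact: vp_V | exact: inC_V].
  + by move=> u u' _ _; rewrite -big_split; apply: eq_bigr => i _; rewrite mulrDr.
  + by move=> u c _ _; rewrite mulr_suml; apply: eq_bigr => i _; rewrite mulrA.
move=> w hw; have hv := vof_V hw.
transitivity (vprime (q (fun i => p i (vof w)))); last by rewrite pq // vp_vof.
rewrite qdec; last by move=> i; apply: pC.
rewrite vp_sum; last by move=> i; apply: inV_mul (zV i) (pCV i w hw).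
apply: eq_bigr => i _; rewrite vp_mul //; exact: pCV.
Qed.

Definition raP := fun (x : A') (b : B') => x * iota' b.
Definition laP := fun (b : B') (y : A') => iota' b * y.
Definition Tp : zmodType := TQ raP laP.
Definition phip : A' -> A' -> Tp := tphi raP laP.
Lemma Htp : is_tensor (fun x (b : B') => x * iota' b) (fun (b : B') y => iota' b * y) phip.
Proof. exact: tensor_exists. Qed.
Lemma phip_bal x b y : phip (x * iota' b) y = phip x (iota' b * y).
Proof. exact: (phi_bal Htp). Qed.

Definition mup (t : Tp) (w : A') : A' :=
  if pb (inV iota' w) then tlift phip (fun x y => x * w * y) t else 0.
Lemma mup_spec w : inV iota' w ->
  additive_fun (mup ^~ w) /\ forall x y, mup (phip x y) w = x * w * y.
Proof.
move=> hw; rewrite /mup; case: pbP => // _.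
apply: (tlift_spec Htp).
  by split=> *; rewrite ?mulrDl ?mulrDr.
by move=> x b y; rewrite -[x * iota' b * w]mulrA hw !mulrA.
Qed.
Lemma mup_add w : additive_fun (mup ^~ w).
Proof.
case: (pbP (inV iota' w)) => hw; first by case: (mup_spec hw).
by move=> x y; rewrite /mup; case: pbP => // _; rewrite addr0.
Qed.
Lemma mup_phi w x y : inV iota' w -> mup (phip x y) w = x * w * y.
Proof. by move=> hw; case: (mup_spec hw) => _ ->. Qed.

Variables (T : zmodType) (laT : A -> T -> T) (raT : T -> A -> T) (phiT : A -> A -> T).
Variables (muT : T -> A -> A) (sT : (A -> A) -> T).
Hypothesis bimT : is_bimod laT raT.
Hypothesis HTt : is_tensor (fun x (b : B) => x * iota b) (fun (b : B) y => iota b * y) phiT.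
Hypothesis HTl : forall x a b, phiT (x * a) b = laT x (phiT a b).
Hypothesis HTr : forall a b y, phiT a (b * y) = raT (phiT a b) y.
Hypothesis mu_add : forall t t' v, muT (t + t') v = muT t v + muT t' v.
Hypothesis mu_phi : forall x y v, inV iota v -> muT (phiT x y) v = x * v * y.
Hypothesis s_add : forall f g, isHomVA iota f -> isHomVA iota g ->
  sT (fun v => f v + g v) = sT f + sT g.
Hypothesis s_lin : forall x y f, isHomVA iota f ->
  sT (fun v => x * f v * y) = laT x (raT (sT f) y).
Hypothesis s_sec : forall f, isHomVA iota f -> forall v, inV iota v -> muT (sT f) v = f v.

Definition psiP (h : M -> A) (m : M) (x y : A) : Tp :=
  \sum_l phip (bra h (phi x (g l))) (bra (fun u => mut l u * y) m).

Lemma psiP_bi h m : good h -> biadditive (psiP h m).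
Proof.
move=> gh; split=> [x x' y|x y y']; rewrite /psiP -big_split; apply: eq_bigr => l _.
  by rewrite (phi_addl Hphi) bra_addm // (phi_addl Htp).
have -> : (fun u => mut l u * (y + y')) = (fun u => mut l u * y + mut l u * y').
  by apply: functional_extensionality => u; rewrite mulrDr.
by rewrite bra_addh; [rewrite (phi_addr Htp) | gd | gd].
Qed.

Lemma psiP_bal h m : good h -> balanced (fun x (b : B) => x * iota b) (fun (b : B) y => iota b * y) (psiP h m).
Proof.
move=> gh x b y; rewrite /psiP.
pose Y l := bra (fun u => mut l u * y) m.
have step l : phip (bra h (phi (x * iota b) (g l))) (Y l) =
   \sum_l' phip (bra h (phi x (g l'))) (iota' (beta l' (laN b (g l))) * Y l).
  rewrite (phi_bal Hphi) {1}(N_decomp (laN b (g l))) (phi_sumr Hphi) bra_summ // (phi_suml Htp).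
  by apply: eq_bigr => l' _; rewrite phiR -bra_mulr // phip_bal.
rewrite (eq_bigr _ (fun l _ => step l)) exchange_big /=; apply: eq_bigr => l' _.
rewrite -(phi_sumr Htp); congr phip.
apply: injM => u; rewrite (bm_ra_sumr bimM) bra_spec; last gd.
have E l : raM u (iota' (beta l' (laN b (g l))) * Y l) = laM (mut l' u * iota (b * nu l (g l)) * y) m.
  by rewrite (bm_raM bimM) bra_spec; [rewrite raM_beta mut_phi nu_lin rmorphM | gd].
rewrite (eq_bigr _ (fun l _ => E l)) -(bm_la_suml bimM) -mulr_suml -mulr_sumr -rmorph_sum.
by rewrite -mulr_sumr sum_nu mulr1 mulrA.
Qed.

Definition Psi (h : M -> A) (m : M) : T -> Tp := tlift phiT (psiP h m).
Lemma Psi_add h m : good h -> additive_fun (Psi h m).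
Proof. by move=> gh; case: (tlift_spec HTt (psiP_bi m gh) (psiP_bal m gh)). Qed.
Lemma Psi_phi h m x y : good h -> Psi h m (phiT x y) = psiP h m x y.
Proof. by move=> gh; rewrite /Psi; case: (tlift_spec HTt (psiP_bi m gh) (psiP_bal m gh)) => _ ->. Qed.

Lemma T_ext (Z : zmodType) (g1 g2 : T -> Z) :
  additive_fun g1 -> additive_fun g2 -> (forall x y, g1 (phiT x y) = g2 (phiT x y)) ->
  forall t, g1 t = g2 t.
Proof. move=> a1 a2 e; exact: (tensor_ext HTt a1 a2 e). Qed.

Lemma mup_sum (I : Type) (r : seq I) (F : I -> Tp) w :
  mup (\sum_(i <- r) F i) w = \sum_(i <- r) mup (F i) w.
Proof. by apply: (af_sumT (f := mup ^~ w)); apply: mup_add. Qed.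

Lemma Psi_mu h m t v : good h -> inV iota v ->
  mup (Psi h m t) (vprime v) = bra h (laM (muT t v) m).
Proof.
move=> gh hv; move: t; apply: T_ext => [||x y].
- exact: (addf_comp (f := mup^~ (vprime v)) (mup_add _) (Psi_add m gh)).
- by move=> t t'; rewrite mu_add (bm_laDl bimM) bra_addm.
rewrite Psi_phi // /psiP mup_sum mu_phi //.
have hw := vp_V hv.
apply: injM => u; rewrite (bm_ra_sumr bimM) bra_spec //.
have E l : raM u (mup (phip (bra h (phi x (g l))) (bra (fun u => mut l u * y) m)) (vprime v))
   = laM (h u * x * v * iota (nu l (g l)) * y) m.
  rewrite mup_phi // !(bm_raM bimM) [raM u (bra h _)]bra_spec // -phiL vp_phi // bra_spec; last gd.
  by rewrite mut_phi.
rewrite (eq_bigr _ (fun l _ => E l)) -(bm_la_suml bimM) -mulr_suml -mulr_sumr -rmorph_sum.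
by rewrite sum_nu rmorph1 mulr1 -(bm_laM bimM) !mulrA.
Qed.

Let laTp := tla phip.
Let raTp := tra phip.

Lemma Psi_la h m t x' : good h -> laTp x' (Psi h m t) = Psi (fun u => h (raM u x')) m t.
Proof.
move=> gh; have gh' := good_comp x' gh; move: t; apply: T_ext => [||x y].
- exact: (addf_comp (f := laTp x') (tla_add Htp x') (Psi_add m gh)).
- exact: Psi_add.
rewrite !Psi_phi // /psiP /laTp (af_sumT (tla_add Htp x')); apply: eq_bigr => l _.
by rewrite (tla_phi Htp) bra_mull.
Qed.
Lemma Psi_ra h m t y' : good h -> raTp (Psi h m t) y' = Psi h (raM m y') t.
Proof.
move=> gh; move: t; apply: T_ext => [||x y].
- exact: (addf_comp (f := raTp^~ y') (tra_add Htp y') (Psi_add m gh)).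
- exact: Psi_add.
rewrite !Psi_phi // /psiP /raTp (af_sumT (tra_add Htp y')); apply: eq_bigr => l _.
by rewrite (tra_phi Htp) bra_mulr //; gd.
Qed.
Lemma Psi_lA h m a t : good h -> Psi h m (laT a t) = Psi (fun u => h u * a) m t.
Proof.
move=> gh; have gh' := good_scale a gh; move: t; apply: T_ext => [||x y].
- exact: (addf_comp (g := laT a) (Psi_add m gh) (bm_la_add bimT a)).
- exact: Psi_add.
rewrite -HTl !Psi_phi // /psiP; apply: eq_bigr => l _.
by rewrite phiL bra_scale.
Qed.
Lemma Psi_rA h m a t : good h -> Psi h m (raT t a) = Psi h (laM a m) t.
Proof.
move=> gh; move: t; apply: T_ext => [||x y].
- exact: (addf_comp (g := raT^~ a) (Psi_add m gh) (fun x y => bm_raD bimT a x y)).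
- exact: Psi_add.
rewrite -HTr !Psi_phi // /psiP; apply: eq_bigr => l _.
rewrite bra_scale; last gd.
have -> : (fun u => mut l u * (y * a)) = (fun u => mut l u * y * a).
  by apply: functional_extensionality => u; rewrite mulrA.
by [].
Qed.
Lemma Psi_sumh (I : Type) (r : seq I) (H : I -> M -> A) m t : (forall i, good (H i)) ->
  Psi (fun u => \sum_(i <- r) H i u) m t = \sum_(i <- r) Psi (H i) m t.
Proof.
move=> gH; have gS := good_sum r gH; move: t; apply: T_ext => [||x y].
- exact: Psi_add.
- by apply: addf_sum => i; apply: Psi_add.
rewrite Psi_phi // /psiP.
under [RHS]eq_bigr do rewrite Psi_phi //.
rewrite exchange_big /=; apply: eq_bigr => l _.
by rewrite bra_sumh // (phi_suml Htp).
Qed.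
Lemma Psi_summ h (I : Type) (r : seq I) (F : I -> M) t : good h ->
  Psi h (\sum_(i <- r) F i) t = \sum_(i <- r) Psi h (F i) t.
Proof.
move=> gh; move: t; apply: T_ext => [||x y].
- exact: Psi_add.
- by apply: addf_sum => i; apply: Psi_add.
rewrite Psi_phi // /psiP.
under [RHS]eq_bigr do rewrite Psi_phi //.
rewrite exchange_big /=; apply: eq_bigr => l _.
by rewrite bra_summ ?(phi_sumr Htp) //; gd.
Qed.

Lemma s0 : sT (fun _ => 0) = 0.
Proof.
have h := s_add (isHom0 iota) (isHom0 iota).
have e : (fun _ : A => (0 : A) + 0) = (fun _ => 0) by apply: functional_extensionality => ?; rewrite addr0.
by rewrite e in h; apply: (addrI (sT (fun _ => 0))); rewrite addr0 -h.
Qed.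
Lemma s_sum (I : Type) (r : seq I) (G : I -> A -> A) : (forall j, isHomVA iota (G j)) ->
  sT (fun a => \sum_(j <- r) G j a) = \sum_(j <- r) sT (G j).
Proof.
move=> h; elim: r => [|j r IH].
  rewrite big_nil -s0; congr sT; apply: functional_extensionality => a; by rewrite big_nil.
have -> : (fun a => \sum_(i <- j :: r) G i a) = (fun a => G j a + \sum_(i <- r) G i a).
  by apply: functional_extensionality => v; rewrite big_cons.
by rewrite s_add ?IH ?big_cons //; apply: isHom_sum.
Qed.
Lemma s_scl c G : isHomVA iota G -> sT (fun a => c * G a) = laT c (sT G).
Proof.
move=> hG; have := s_lin c 1 hG; rewrite (bm_ra1 bimT) => <-.
by congr sT; apply: functional_extensionality => a; rewrite mulr1.
Qed.
Lemma s_scr d G : isHomVA iota G -> sT (fun a => G a * d) = raT (sT G) d.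
Proof.
move=> hG; have := s_lin 1 d hG; rewrite (bm_la1 bimT) => <-.
by congr sT; apply: functional_extensionality => a; rewrite mul1r.
Qed.

Definition Fik (i k : 'I_nM) (f : A' -> A') (a : A) : A :=
  if pb (inV iota a) then fM k (raM (eM i) (f (vprime a))) else 0.

Lemma Fik_hom i k f : isHomVA iota' f -> isHomVA iota (Fik i k f).
Proof.
case=> fa fl fo; split=> [v w hv hw|v c hv hc|a ha]; rewrite /Fik.
- have hvw := inV_add hv hw.
  do 3 (case: pbP => //; move=> _).
  rewrite vp_add // fa; [|exact: vp_V|exact: vp_V].
  by rewrite (bm_raDr bimM) fM_add.
- have hcV := inC_V iota hc; have hvc := inV_mul hv hcV.
  do 2 (case: pbP => //; move=> _).
  rewrite vp_mul // fl; [|exact: vp_V|exact: vp_C].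
  by rewrite (bm_raM bimM) vp_Cact // fM_lin hc.
by case: pbP.
Qed.

Definition sp (f : A' -> A') : Tp := \sum_i \sum_k Psi (fM i) (eM k) (sT (Fik i k f)).

Lemma sp_add f f' : isHomVA iota' f -> isHomVA iota' f' ->
  sp (fun v => f v + f' v) = sp f + sp f'.
Proof.
move=> hf hf'; rewrite /sp -big_split; apply: eq_bigr => i _.
rewrite -big_split; apply: eq_bigr => k _.
have -> : Fik i k (fun v => f v + f' v) = (fun a => Fik i k f a + Fik i k f' a).
  apply: functional_extensionality => a; rewrite /Fik; case: pbP => _; last by rewrite addr0.
  by rewrite (bm_raDr bimM) fM_add.
rewrite s_add; [|exact: Fik_hom|exact: Fik_hom].
by rewrite (Psi_add _ (good_fM i)).
Qed.

Lemma sp_l f x' : isHomVA iota' f -> sp (fun v => x' * f v) = laTp x' (sp f).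
Proof.
move=> hf.
pose c (i j : 'I_nM) := fM j (raM (eM i) x').
have eF i k : Fik i k (fun v => x' * f v) = (fun a => \sum_j (fun a => c i j * Fik j k f a) a).
  apply: functional_extensionality => a; rewrite /Fik; case: pbP => ha /=.
    rewrite (bm_raM bimM) {1}(M_decomp (raM (eM i) x')) (bm_ra_suml bimM) (af_sumT (fM_add k)).
    by apply: eq_bigr => j _; rewrite -(bm_lara bimM) fM_lin.
  by rewrite big1 // => j _; rewrite mulr0.
have hF j k : isHomVA iota (Fik j k f) := Fik_hom j k hf.
have hSl j k cc : isHomVA iota (fun a => cc * Fik j k f a).
  have e : (fun v => cc * Fik j k f v * 1) = (fun a => cc * Fik j k f a).
    by apply: functional_extensionality => a; rewrite mulr1.
  by rewrite -e; apply: isHom_scale.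
transitivity (\sum_i \sum_k \sum_j Psi (fun u => fM i u * c i j) (eM k) (sT (Fik j k f))).
  rewrite /sp; apply: eq_bigr => i _; apply: eq_bigr => k _.
  rewrite eF s_sum; last by move=> j; apply: hSl.
  rewrite (af_sumT (Psi_add (eM k) (good_fM i))); apply: eq_bigr => j _.
  by rewrite s_scl // Psi_lA //; exact: good_fM.
rewrite exchange_big /=.
transitivity (\sum_k \sum_j \sum_i Psi (fun u => fM i u * c i j) (eM k) (sT (Fik j k f))).
  by apply: eq_bigr => k _; rewrite exchange_big.
rewrite exchange_big /=.
rewrite /sp /laTp (af_sumT (tla_add Htp x')); apply: eq_bigr => j _.
rewrite (af_sumT (tla_add Htp x')); apply: eq_bigr => k _.
rewrite -Psi_sumh; last by move=> i; apply: good_scale; apply: good_fM.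
rewrite -/laTp Psi_la; last exact: good_fM.
congr Psi; apply: functional_extensionality => u.
rewrite {2}(M_decomp u) (bm_ra_suml bimM) (af_sumT (fM_add j)); apply: eq_bigr => i _.
by rewrite -(bm_lara bimM) fM_lin.
Qed.

Lemma sp_r f y' : isHomVA iota' f -> sp (fun v => f v * y') = raTp (sp f) y'.
Proof.
move=> hf.
pose d (j k : 'I_nM) := fM k (raM (eM j) y').
have eF i k : Fik i k (fun v => f v * y') = (fun a => \sum_j (fun a => Fik i j f a * d j k) a).
  apply: functional_extensionality => a; rewrite /Fik; case: pbP => ha /=.
    rewrite (bm_raM bimM) {1}(M_decomp (raM (eM i) (f (vprime a)))) (bm_ra_suml bimM).
    rewrite (af_sumT (fM_add k)).
    by apply: eq_bigr => j _; rewrite -(bm_lara bimM) fM_lin.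
  by rewrite big1 // => j _; rewrite mul0r.
have hF j k : isHomVA iota (Fik j k f) := Fik_hom j k hf.
have hSr i j dd : isHomVA iota (fun a => Fik i j f a * dd).
  have e : (fun v => 1 * Fik i j f v * dd) = (fun a => Fik i j f a * dd).
    by apply: functional_extensionality => a; rewrite mul1r.
  by rewrite -e; apply: isHom_scale.
transitivity (\sum_i \sum_k \sum_j Psi (fM i) (laM (d j k) (eM k)) (sT (Fik i j f))).
  rewrite /sp; apply: eq_bigr => i _; apply: eq_bigr => k _.
  rewrite eF s_sum; last by move=> j; apply: hSr.
  rewrite (af_sumT (Psi_add (eM k) (good_fM i))); apply: eq_bigr => j _.
  by rewrite s_scr // Psi_rA //; exact: good_fM.
rewrite /sp /raTp (af_sumT (tra_add Htp y')); apply: eq_bigr => i _.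
rewrite exchange_big /= (af_sumT (tra_add Htp y')); apply: eq_bigr => j _.
rewrite -Psi_summ; last exact: good_fM.
rewrite -/raTp Psi_ra; last exact: good_fM.
by rewrite -M_decomp.
Qed.

Lemma sp_sec f : isHomVA iota' f -> forall w, inV iota' w -> mup (sp f) w = f w.
Proof.
move=> hf w hw; have hv := vof_V hw.
rewrite -(vp_vof hw) /sp mup_sum.
transitivity (\sum_i bra (fM i) (raM (eM i) (f (vprime (vof w))))).
  apply: eq_bigr => i _; rewrite mup_sum.
  rewrite [raM (eM i) _]M_decomp bra_summ; last exact: good_fM.
  apply: eq_bigr => k _; rewrite Psi_mu //; last exact: good_fM.
  rewrite s_sec //; last exact: Fik_hom.
  by rewrite /Fik; case: pbP.
apply: injM => u; rewrite (bm_ra_sumr bimM).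
set F := f (vprime (vof w)).
have E i : raM u (bra (fM i) (raM (eM i) F)) = raM (laM (fM i u) (eM i)) F.
  by rewrite bra_spec; [rewrite (bm_lara bimM) | exact: good_fM].
by rewrite (eq_bigr _ (fun i _ => E i)) -(bm_ra_suml bimM) -M_decomp.
Qed.

Lemma ss_main : V_fgp iota -> strongly_separable iota'.
Proof.
move=> hV; split; first exact: Vfgp' hV.
exists Tp, laTp, raTp, phip; split.
- exact: ext_bimod Htp.
- exact: Htp.
- by move=> x a b; rewrite /laTp (tla_phi Htp).
- by move=> a b y; rewrite /raTp (tra_phi Htp).
exists mup, sp; split.
- by move=> t t' v; rewrite mup_add.
- by move=> x y v hv; rewrite mup_phi.
- exact: sp_add.
- move=> x y f hf.
  have hfy : isHomVA iota' (fun v => f v * y).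
    have e : (fun v => 1 * f v * y) = (fun v => f v * y).
      by apply: functional_extensionality => a; rewrite mul1r.
    by rewrite -e; apply: isHom_scale.
  rewrite -sp_r // -sp_l //; congr sp; apply: functional_extensionality => v.
  by rewrite mulrA.
- exact: sp_sec.
Qed.

End Main.

Theorem theorem3p4 (A B A' B' : pzRingType)
    (iota : {rmorphism B -> A}) (iota' : {rmorphism B' -> A'}) :
  injective iota -> injective iota' ->
  strongly_separable iota -> morita_equiv iota iota' ->
  strongly_separable iota'.
Proof.
move=> _ _ [hV [T [laT [raT [phiT [bimT HTt HTl HTr [muT [sT [mu_add mu_phi s_add s_lin s_sec]]]]]]]]].
move=> [M [laM [raM [N [laN [raN [HM HN [phi [Hphi phiL phiR]]]]]]]]].
case: HM => bimM [nM [fM [qM [fM_hom qM_add qM_lin qM_fM]]]] _ endM injM.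
case: HN => bimN _ [kN [pN [qN [pN_hom qN_add qN_lin qN_pN]]]] endN _.
exact: (ss_main bimM bimN endM injM endN fM_hom qM_add qM_lin qM_fM qN_add qN_lin qN_pN
  Hphi phiL phiR bimT HTt HTl HTr mu_add mu_phi s_add s_lin s_sec hV).
Qed.
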